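(* Let $n\ge 3$, let $d_1,\dots,d_{n-1}>0$, and let $k_1,\dots,k_{n-1}$ be real gains with $k_1+1>k_2$, $k_i>k_{i+1}$ for $i=2,\ldots,n-2$, and $k_{n-1}>0$. Define $f:\mathbb{R}^{n-1}\to\mathbb{R}^{n-1}$, writing $s_i(z)=\mathrm{sgn}(z_i)\,\mathrm{sgn}(|z_i|-d_i)$, by $$f_1(z)=-(k_1+1)s_1(z)+k_2 s_2(z),$$ $$f_i(z)=s_{i-1}(z)-(k_i+1)s_i(z)+k_{i+1}s_{i+1}(z),\quad i=2,\ldots,n-2,$$ $$f_{n-1}(z)=s_{n-2}(z)-(k_{n-1}+1)s_{n-1}(z).$$ Then the set of equilibria $\{z\in\mathbb{R}^{n-1}:\mathbf{0}\in\mathcal{K}(f(z))\}$ equals $$\mathcal{E}=\Big\{z\in\mathbb{R}^{n-1}:\sum_{i=1}^{n-1}|z_i|\,\big||z_i|-d_i\big|=0\Big\}.$$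
   Context: The sign function is $\mathrm{sgn}(z)=+1$ if $z\ge 0$ and $\mathrm{sgn}(z)=-1$ if $z<0$. For a (possibly discontinuous) vector field $f$, the Krasowskii regularization is $\mathcal{K}(f(z))=\bigcap_{\delta>0}\overline{\mathrm{co}}\,(f(B(z,\delta)))$, where $\overline{\mathrm{co}}$ denotes the closed convex hull and $B(z,\delta)$ the open ball of radius $\delta$ centered at $z$. (The vector field $f$ arises as the dynamics of relative positions $z_i=x_i-x_{i+1}$ of $n$ agents on a line.) *)

(* Defs.v *)
From HB Require Import structures.
From mathcomp Require Import all_boot all_order all_algebra.
From mathcomp Require Import all_classical all_reals all_analysis.
Set Implicit Arguments. Unset Strict Implicit. Unset Printing Implicit Defensive.
Import Order.TTheory GRing.Theory Num.Theory.
Import numFieldNormedType.Exports.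
Local Open Scope classical_set_scope.
Local Open Scope ring_scope.

Definition sgn {R : realType} (x : R) : R := if 0 <= x then 1 else -1.

Definition conv_hull {R : realType} {m : nat} (A : set 'rV[R]_m) : set 'rV[R]_m :=
  [set x | exists (l : nat) (w : 'I_l -> R) (p : 'I_l -> 'rV[R]_m),
     (forall i, 0 <= w i) /\ \sum_(i < l) w i = 1 /\
     (forall i, A (p i)) /\ x = \sum_(i < l) w i *: p i].

Definition cl_conv {R : realType} {m : nat} (A : set 'rV[R]_m) : set 'rV[R]_m :=
  closure (conv_hull A).

Definition krasowskii {R : realType} {m : nat} (F : 'rV[R]_m -> 'rV[R]_m)
  (z : 'rV[R]_m) : set 'rV[R]_m :=
  \bigcap_(delta in [set e : R | 0 < e]) cl_conv (F @` ball z delta).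

(* 1-based component access: zc z i = z_i for 1 <= i <= m *)
Definition zc {R : realType} {m : nat} (z : 'rV[R]_m) (i : nat) : R :=
  match @insub nat (fun j => (j < m)%N) 'I_m i.-1 with
  | Some j => z ord0 j
  | None => 0
  end.

(* s_i(z) = sgn(z_i) sgn(|z_i| - d_i) for 1 <= i <= m, and 0 outside this
   range (so that the boundary terms of f_1 and f_{n-1} vanish). *)
Definition s_fun {R : realType} {m : nat} (d : nat -> R) (z : 'rV[R]_m) (i : nat) : R :=
  if (1 <= i <= m)%N then sgn (zc z i) * sgn (`|zc z i| - d i) else 0.

Definition f_comp {R : realType} {m : nat} (k d : nat -> R) (z : 'rV[R]_m) (i : nat) : R :=
  s_fun d z i.-1 - (k i + 1) * s_fun d z i + k i.+1 * s_fun d z i.+1.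

Definition f_field {R : realType} {m : nat} (k d : nat -> R) (z : 'rV[R]_m) : 'rV[R]_m :=
  \row_(j < m) f_comp k d z j.+1.

(* Main.v *)
Require Import Defs.
From HB Require Import structures.
From mathcomp Require Import all_boot all_order all_algebra.
From mathcomp Require Import all_classical all_reals all_analysis.
From mathcomp Require Import ring lra zify.
From Stdlib Require Import Lia.
Import Order.TTheory GRing.Theory Num.Theory.
Import numFieldNormedType.Exports.
Local Open Scope classical_set_scope.
Local Open Scope ring_scope.
Lemma kpos (R : realType) (m : nat) (k : nat -> R) :
  (2 <= m)%N -> (forall i, (2 <= i <= m - 1)%N -> k i.+1 < k i) -> 0 < k m ->
  forall i, (2 <= i <= m)%N -> 0 < k i.
Proof.
move=> m2 hk km.
have H : forall p, (2 <= m - p)%N -> 0 < k (m - p)%N.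
  elim=> [|p IH] h; first by rewrite subn0.
  have e : ((m - p.+1).+1 = m - p)%N by lia.
  have h1 : (2 <= m - p)%N by lia.
  apply: lt_trans (IH h1) _; rewrite -{1}e; apply: hk; apply/andP; split; lia.
move=> i /andP [h1 h2]; have e : i = (m - (m - i))%N by lia.
rewrite e; apply: H; lia.
Qed.

Lemma recur (R : realType) (m : nat) (k t : nat -> R) :
  t m.+1 = 0 ->
  (forall i, (1 <= i <= m)%N -> t i.-1 - (k i + 1) * t i + k i.+1 * t i.+1 = 0) ->
  forall i, (1 <= i <= m)%N -> t i.-1 = t m + k i * t i.
Proof.
move=> tm H.
have G : forall p, (1 <= m - p)%N -> t (m - p)%N.-1 = t m + k (m - p)%N * t (m - p)%N.
  elim=> [|p IH] h.
    rewrite subn0 in h *; have := H m; rewrite tm => /(_ ltac:(apply/andP; split; lia)); lra.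
  have e : ((m - p.+1).+1 = m - p)%N by lia.
  have h1 : (1 <= m - p)%N by lia.
  have e2 : ((m - p).-1 = m - p.+1)%N by lia.
  have := IH h1; rewrite e2 => E.
  have := H (m - p.+1)%N; rewrite e => /(_ ltac:(apply/andP; split; lia)).
  rewrite E; lra.
move=> i /andP [h1 h2]; have e : i = (m - (m - i))%N by lia.
rewrite e; apply: G; lia.
Qed.
Lemma nopos (R : realType) (m : nat) (k t : nat -> R) :
  (2 <= m)%N -> k 2%N < k 1%N + 1 ->
  (forall i, (2 <= i <= m - 1)%N -> k i.+1 < k i) -> 0 < k m ->
  t 0%N = 0 -> t m.+1 = 0 ->
  (forall i, (1 <= i <= m)%N -> t i.-1 - (k i + 1) * t i + k i.+1 * t i.+1 = 0) ->
  0 < t m -> False.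
Proof.
move=> m2 k12 hk km t0 tm H T0.
have kp := @kpos R m k m2 hk km.
have rc := @recur R m k t tm H.
have S : forall p, (1 <= m - p.+1)%N -> 0 < t (m - p.+1)%N.+1 /\ t (m - p.+1)%N.+1 < t (m - p.+1)%N.
  elim=> [|p IH] h.
    have e : ((m - 1).+1 = m)%N by lia.
    rewrite e; have := rc m ltac:(apply/andP; split; lia).
    have e2 : (m.-1 = m - 1)%N by lia.
    rewrite e2 => ->; split => //.
    have := mulr_gt0 km T0; lra.
  set i := (m - p.+2)%N.
  have e : (i.+1 = m - p.+1)%N by rewrite /i; lia.
  rewrite e.
  have [A B] := IH ltac:(lia).
  split; first lra.
  have r1 := rc (m - p.+1)%N.+1 ltac:(apply/andP; split; lia).
  have r2 := rc (m - p.+1)%N ltac:(apply/andP; split; lia).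
  have e3 : ((m - p.+1).-1 = i)%N by rewrite /i; lia.
  rewrite e3 in r2.
  rewrite /= in r1.
  have k1 := hk (m - p.+1)%N ltac:(apply/andP; split; lia).
  have k2 := kp (m - p.+1)%N.+1 ltac:(apply/andP; split; lia).
  have P1 : 0 < (k (m - p.+1)%N - k (m - p.+1)%N.+1) * t (m - p.+1)%N.
    apply: mulr_gt0; lra.
  have P2 : 0 < k (m - p.+1)%N.+1 * (t (m - p.+1)%N - t (m - p.+1)%N.+1).
    apply: mulr_gt0; lra.
  nra.
have [A B] := S (m - 2)%N ltac:(lia).
have e : ((m - (m - 2).+1) = 1)%N by lia.
rewrite e in A B.
have r1 := rc 1%N ltac:(apply/andP; split; lia).
have r2 := rc 2%N ltac:(apply/andP; split; lia).
rewrite /= t0 in r1 r2.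
have k2 := kp 2%N ltac:(apply/andP; split; lia).
have P1 : 0 < (k 1%N + 1 - k 2%N) * t 1%N by apply: mulr_gt0; lra.
have P2 : 0 < k 2%N * (t 1%N - t 2%N) by apply: mulr_gt0; lra.
nra.
Qed.

Lemma tzero (R : realType) (m : nat) (k t : nat -> R) :
  (2 <= m)%N -> k 2%N < k 1%N + 1 ->
  (forall i, (2 <= i <= m - 1)%N -> k i.+1 < k i) -> 0 < k m ->
  t 0%N = 0 -> t m.+1 = 0 ->
  (forall i, (1 <= i <= m)%N -> t i.-1 - (k i + 1) * t i + k i.+1 * t i.+1 = 0) ->
  forall i, (1 <= i <= m)%N -> t i = 0.
Proof.
move=> m2 k12 hk km t0 tm H.
have Tz : t m = 0.
  case: (ltrgtP (t m) 0) => // h; exfalso.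
    apply: (@nopos R m k (fun i => - t i)) => //; first by rewrite t0 oppr0.
      by rewrite tm oppr0.
      move=> i hi; have := H i hi; lra.
    lra.
  exact: (@nopos R m k t).
have rc := @recur R m k t tm H.
have G : forall p, (1 <= m - p)%N -> t (m - p)%N = 0.
  elim=> [|p IH] h; first by rewrite subn0.
  have := rc (m - p)%N ltac:(apply/andP; split; lia).
  have e : ((m - p).-1 = m - p.+1)%N by lia.
  rewrite e Tz IH; last lia.
  by rewrite mulr0 addr0.
move=> i /andP [h1 h2]; have e : i = (m - (m - i))%N by lia.
rewrite e; apply: G; lia.
Qed.
Definition getc {R : realType} {m : nat} (u : 'rV[R]_m) (i : nat) : R :=
  if (1 <= i <= m)%N then zc u i else 0.

Definition gmap {R : realType} {m : nat} (k : nat -> R) (u : 'rV[R]_m) : 'rV[R]_m :=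
  \row_(j < m) (getc u j - (k j.+1 + 1) * getc u j.+1 + k j.+2 * getc u j.+2).

Definition sv {R : realType} {m : nat} (d : nat -> R) (z : 'rV[R]_m) : 'rV[R]_m :=
  \row_(j < m) s_fun d z j.+1.

Lemma zc_lin (R : realType) (m : nat) (a : R) (u v : 'rV[R]_m) i :
  zc (a *: u + v) i = a * zc u i + zc v i.
Proof.
rewrite /zc; case: insubP => [j _ _|_]; first by rewrite !mxE.
by rewrite mulr0 addr0.
Qed.

Lemma zc_ord (R : realType) (m : nat) (u : 'rV[R]_m) (j : 'I_m) :
  zc u j.+1 = u ord0 j.
Proof.
rewrite /zc /=; case: insubP => [j' _ e|]; last by rewrite ltn_ord.
by congr (u ord0 _); apply: val_inj.
Qed.

Lemma getc_lin (R : realType) (m : nat) (a : R) (u v : 'rV[R]_m) i :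
  getc (a *: u + v) i = a * getc u i + getc v i.
Proof.
rewrite /getc; case: ifP => _; first exact: zc_lin.
by rewrite mulr0 addr0.
Qed.

Lemma gmap_linear (R : realType) (m : nat) (k : nat -> R) :
  linear (@gmap R m k).
Proof.
move=> a u v; apply/rowP => j; rewrite !mxE !getc_lin; ring.
Qed.

HB.instance Definition _ (R : realType) (m : nat) (k : nat -> R) :=
  GRing.isLinear.Build R 'rV[R]_m 'rV[R]_m _ (@gmap R m k) (@gmap_linear R m k).

Lemma getc_sv (R : realType) (m : nat) (d : nat -> R) (z : 'rV[R]_m) i :
  getc (sv d z) i = s_fun d z i.
Proof.
rewrite /getc; case: ifP => h; last by rewrite /s_fun h.
move/andP: h => [h1 h2].
rewrite /zc; case: insubP => [j _ e|]; last by move=> hh; lia.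
by rewrite mxE e prednK.
Qed.

Lemma f_fieldE (R : realType) (m : nat) (k d : nat -> R) (z : 'rV[R]_m) :
  f_field k d z = gmap k (sv d z).
Proof.
by apply/rowP => j; rewrite !mxE /f_comp !getc_sv.
Qed.

Lemma sv_ord (R : realType) (m : nat) (d : nat -> R) (z : 'rV[R]_m) (j : 'I_m) :
  sv d z ord0 j = sgn (z ord0 j) * sgn (`|z ord0 j| - d j.+1).
Proof.
rewrite mxE /s_fun zc_ord; case: ifP => //; by rewrite ltn_ord.
Qed.

Lemma gmap_inj (R : realType) (m : nat) (k : nat -> R) (u : 'rV[R]_m) :
  (2 <= m)%N -> k 2%N < k 1%N + 1 ->
  (forall i, (2 <= i <= m - 1)%N -> k i.+1 < k i) -> 0 < k m ->
  gmap k u = 0 -> u = 0.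
Proof.
move=> m2 k12 hk km g0.
have Z := @tzero R m k (getc u) m2 k12 hk km.
have T : forall i, (1 <= i <= m)%N -> getc u i = 0.
  apply: Z; first by rewrite /getc.
    by rewrite /getc; case: ifP => //; lia.
  move=> i /andP [h1 h2].
  have hj : (i.-1 < m)%N by lia.
  have := congr1 (fun w : 'rV[R]_m => w ord0 (Ordinal hj)) g0; rewrite !mxE /=.
  by rewrite prednK.
apply/rowP => j; rewrite mxE -(@zc_ord R m u j).
have := T j.+1 ltac:(apply/andP; split; [by []| exact: ltn_ord]).
by rewrite /getc ltn_ord.
Qed.
Lemma M_unit (R : realType) (m : nat) (k : nat -> R) :
  (2 <= m)%N -> k 2%N < k 1%N + 1 ->
  (forall i, (2 <= i <= m - 1)%N -> k i.+1 < k i) -> 0 < k m ->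
  lin1_mx (@gmap R m k) \in unitmx.
Proof.
move=> m2 k12 hk km.
rewrite -row_free_unit -kermx_eq0; apply/eqP.
set K := kermx _.
have KM : K *m lin1_mx (@gmap R m k) = 0 by apply/sub_kermxP.
apply/row_matrixP => i; rewrite row0.
apply: (@gmap_inj R m k _ m2 k12 hk km).
by rewrite -mul_rV_lin1 -row_mul KM row0.
Qed.

Lemma sgn_pos {R : realType} {x : R} : 0 <= x -> sgn x = 1.
Proof. by rewrite /sgn => ->. Qed.

Lemma sgn_neg {R : realType} {x : R} : x < 0 -> sgn x = -1.
Proof. by rewrite /sgn leNgt => ->. Qed.

Lemma sgn_near (R : realType) (x y : R) : `|y - x| < `|x| -> sgn y = sgn x.
Proof.
rewrite ltr_norml => /andP [h1 h2].
case: (leP 0 x) => hx.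
  rewrite (sgn_pos hx) sgn_pos //.
  rewrite ger0_norm // in h1 h2; lra.
rewrite (sgn_neg hx) sgn_neg //.
rewrite ltr0_norm // in h1 h2; lra.
Qed.

Lemma flip (R : realType) (x D e : R) : 0 < e -> e < D ->
  (x = 0 \/ `|x| = D) ->
  sgn (if x < 0 then x + e else x - e) * sgn (`|if x < 0 then x + e else x - e| - D)
  = - (sgn x * sgn (`|x| - D)).
Proof.
move=> e0 eD [->|].
  rewrite ltxx sub0r normrN normr0 (gtr0_norm e0) (sgn_neg (x := - e)); last lra.
  rewrite (sgn_neg (x := e - D)); last lra.
  rewrite sgn_pos // (sgn_neg (x := 0 - D)); last lra.
  lra.
case: (ltrP x 0) => hx.
  rewrite ltr0_norm // => hD.
  rewrite ltr0_norm; last lra.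
  rewrite (sgn_neg hx) (sgn_neg (x := x + e)); last lra.
  rewrite (sgn_neg (x := - (x + e) - D)); last lra.
  rewrite (sgn_pos (x := - x - D)); last lra.
  lra.
rewrite ger0_norm // => hD.
rewrite ger0_norm; last lra.
rewrite (sgn_pos hx) (sgn_pos (x := x - e)); last lra.
rewrite (sgn_neg (x := x - e - D)); last lra.
rewrite (sgn_pos (x := x - D)); last lra.
lra.
Qed.
Lemma ballP (R : realType) m (z w : 'rV[R]_m) e :
  ball z e w <-> (0 < e /\ forall i, `|z ord0 i - w ord0 i| < e).
Proof.
split.
- move=> [e0 H]; split=> // i; have := H ord0 i; by rewrite /ball /= .
- move=> [e0 H]; split=> // i j; rewrite (ord1 i) /ball /=; exact: H.
Qed.

Theorem proposition1 (R : realType) (n : nat) (k d : nat -> R) :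
  (3 <= n)%N ->
  (forall i : nat, (1 <= i <= n.-1)%N -> 0 < d i) ->
  k 1%N + 1 > k 2%N ->
  (forall i : nat, (2 <= i <= n - 2)%N -> k i > k i.+1) ->
  k n.-1 > 0 ->
  [set z : 'rV[R]_(n.-1) | krasowskii (f_field k d) z 0] =
  [set z : 'rV[R]_(n.-1) | \sum_(i < n.-1) `|z ord0 i| * `| `|z ord0 i| - d i.+1| = 0].
Proof.
move=> n3 hd k12 hk km.
set m := n.-1 in hd km *.
have m2 : (2 <= m)%N by rewrite /m; lia.
have hk' : forall i, (2 <= i <= m - 1)%N -> k i.+1 < k i.
  move=> i hi; apply: hk; rewrite /m in hi; lia.
have Mu := @M_unit R m k m2 k12 hk' km.
set M := lin1_mx (@gmap R m k) in Mu.
have FE : forall w, f_field k d w = sv d w *m M.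
  by move=> w; rewrite f_fieldE /M mul_rV_lin1.
apply/seteqP; split => z /=.
- move=> Kz; apply/eqP; apply: contraT => nz; exfalso.
  have [j Hj] : exists j : 'I_m, `|z ord0 j| * `| `|z ord0 j| - d j.+1| != 0.
    case: (pselect (exists j : 'I_m, `|z ord0 j| * `| `|z ord0 j| - d j.+1| != 0)) => // hne.
    exfalso; move/negP: nz; apply; apply/eqP; apply: big1 => j _.
    case: (eqVneq (`|z ord0 j| * `| `|z ord0 j| - d j.+1|) 0) => // hj.
    by exfalso; apply: hne; exists j.
  move: Hj; rewrite mulf_eq0 negb_or !normr_eq0 => /andP [a0 aD].
  set a := z ord0 j in a0 aD.
  set D := d j.+1 in aD.
  set del := Num.min `|a| `| `|a| - D|.
  have del0 : 0 < del by rewrite /del lt_min !normr_gt0 a0 aD.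
  set sig := sv d z ord0 j.
  have Sb : forall w, ball z del w -> sv d w ord0 j = sig.
    move=> w /ballP [_ hw]; rewrite /sig !sv_ord -/a -/D.
    have := hw j; rewrite lt_min -/a => /andP [h1 h2].
    congr (_ * _); apply: sgn_near; first by rewrite distrC.
    have -> : `|w ord0 j| - D - (`|a| - D) = `|w ord0 j| - `|a| by ring.
    apply: le_lt_trans (ler_dist_dist _ _) _; by rewrite distrC.
  have sig1 : `|sig| = 1.
    rewrite /sig sv_ord /sgn; case: ifP => _; case: ifP => _;
      by rewrite ?(mulr1, mulrN1, mulN1r, opprK, normrN, normr1).
  set N := invmx M.
  set S := \sum_(l < m) `|N l j|.
  have S0 : 0 <= S by apply: sumr_ge0 => l _; exact: normr_ge0.
  set r := (1 + S)^-1.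
  have r0 : 0 < r by rewrite /r invr_gt0; lra.
  have K1 : cl_conv (f_field k d @` ball z del) 0 by exact: Kz.
  have [c [Cc Bc]] := K1 (ball 0 r) (nbhsx_ballx 0 r r0).
  move: Cc => [l [w [p [w0 [sw [hp Ec]]]]]].
  have Phi : (c *m N) ord0 j = sig.
    rewrite Ec mulmx_suml summxE.
    transitivity (\sum_(i < l) w i * sig).
      apply: eq_bigr => i _.
      have [w' bw' Ew] := hp i.
      by rewrite -scalemxAl mxE -Ew FE /N mulmxK // Sb.
    by rewrite -mulr_suml sw mul1r.
  have Bd : `|(c *m N) ord0 j| <= r * S.
    rewrite mxE; apply: le_trans (ler_norm_sum _ _ _) _.
    rewrite /S mulr_sumr; apply: ler_sum => i _.
    rewrite normrM; apply: ler_wpM2r; first exact: normr_ge0.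
    move/ballP: Bc => [_ hc]; have := hc i; rewrite mxE sub0r normrN => h.
    exact: ltW.
  have rS : r * S < 1.
    rewrite /r mulrC ltr_pdivrMr; lra.
  move: Bd; rewrite Phi sig1; lra.
- move=> Hz.
  move=> del /= del0.
  apply: subset_closure.
  have Ez : forall i : 'I_m, z ord0 i = 0 \/ `|z ord0 i| = d i.+1.
    move=> i; have := psumr_eq0P _ Hz (i := i) isT.
    rewrite /= => /(_ (fun i _ => mulr_ge0 (normr_ge0 _) (normr_ge0 _))).
    move/eqP; rewrite mulf_eq0 !normr_eq0 subr_eq0 => /orP [/eqP h|/eqP h]; by [left|right].
  pose e := fun i : 'I_m => Num.min del (d i.+1) / 2.
  have e0 : forall i, 0 < e i.
    move=> i; rewrite /e divr_gt0 // lt_min del0 hd //; apply/andP; split=> //; exact: ltn_ord.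
  have eD : forall i, e i < d i.+1.
    move=> i; have hdi : 0 < d i.+1 by apply: hd; apply/andP; split=> //; exact: ltn_ord.
    have : Num.min del (d i.+1) <= d i.+1 by rewrite ge_min lexx orbT.
    rewrite /e; lra.
  have edel : forall i, e i < del.
    move=> i; have : Num.min del (d i.+1) <= del by rewrite ge_min lexx.
    have := e0 i; rewrite /e; lra.
  pose w' := \row_(i < m) (if z ord0 i < 0 then z ord0 i + e i else z ord0 i - e i).
  have Sw : sv d w' = - sv d z.
    apply/rowP => i; rewrite [RHS]mxE !sv_ord mxE.
    exact: flip (e0 i) (eD i) (Ez i).
  have Fw : f_field k d w' = - f_field k d z by rewrite !f_fieldE Sw linearN.
  exists 2%N, (fun _ => 1/2), (fun i : 'I_2 => if val i == 0%N then f_field k d z else f_field k d w').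
  split; first by move=> i; rewrite divr_ge0.
  split; first by rewrite big_ord_recl big_ord1; lra.
  split.
    move=> i; case: ifP => _.
      by exists z => //; apply: ballxx.
    exists w' => //; apply/ballP; split=> // i0; rewrite mxE.
    case: ifP => _.
      by rewrite opprD addrA subrr sub0r normrN gtr0_norm.
    by rewrite opprB addrC subrK gtr0_norm.
  rewrite big_ord_recl big_ord1 /= Fw.
  by rewrite scalerN subrr.
Qed.
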